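(* For every positive integer $n$, \[ \sum_{k=1}^{n}{n\brace k}\binom{-1/2}{k}k!\,H_k\,(-1)^n2^n=\sum_{k=0}^{n-1}\binom{n}{k+1}E_k(1). \]
   Context: ${n\brace k}$ is the Stirling number of the second kind, $H_k=\sum_{i=1}^k1/i$, $\binom{x}{k}=x(x-1)\cdots(x-k+1)/k!$. The Euler polynomials $E_n(x)$ are defined by $\sum_{n\ge0}E_n(x)\frac{t^n}{n!}=\frac{2}{e^t+1}e^{xt}$. *)

(* Defs.v *)
From mathcomp Require Import all_boot all_order all_algebra.
Set Implicit Arguments. Unset Strict Implicit. Unset Printing Implicit Defensive.
Import Order.TTheory GRing.Theory Num.Theory.
Local Open Scope ring_scope.

Fixpoint stirling2 (n k : nat) : nat :=
  match n, k with
  | 0, 0 => 1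
  | 0, _.+1 => 0
  | _.+1, 0 => 0
  | n'.+1, k'.+1 => (k'.+1 * stirling2 n' k'.+1 + stirling2 n' k')%N
  end.

Definition harmonic (k : nat) : rat := \sum_(1 <= i < k.+1) (i%:R)^-1.

Definition gbinom (x : rat) (k : nat) : rat :=
  (\prod_(i < k) (x - i%:R)) / (k`!)%:R.

(* Euler polynomials E_n(x), defined by sum_n E_n(x) t^n/n! = 2 e^{xt}/(e^t+1).
   Comparing coefficients of t^n in (e^t + 1) * G(t) = 2 e^{xt} gives
     E_n(x) + sum_{k=0}^{n} C(n,k) E_k(x) = 2 x^n,
   i.e. E_n(x) = x^n - 1/2 * sum_{k<n} C(n,k) E_k(x), which determines the
   sequence uniquely. euler_seq x n = [:: E_0(x); ...; E_n(x)]. *)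
Fixpoint euler_seq (x : rat) (n : nat) : seq rat :=
  match n with
  | 0 => [:: 1]
  | n'.+1 =>
      let s := euler_seq x n' in
      rcons s (x ^+ n'.+1 - 2%:R^-1 * \sum_(k < n'.+1) ('C(n'.+1, k))%:R * nth 0 s k)
  end.

Definition eulerE (n : nat) (x : rat) : rat := nth 0 (euler_seq x n) n.

(* Main.v *)
Require Import Defs.
From mathcomp Require Import all_boot all_order all_algebra.
From mathcomp Require Import ring.
Import GRing.Theory Num.Theory.
Local Open Scope ring_scope.

Definition conv (f g : nat -> rat) (n : nat) : rat :=
  \sum_(j < n.+1) 'C(n, j)%:R * (f j * g (n - j)%N).
Definition del (n : nat) : rat := (n == 0%N)%:R.

Lemma conv_eq f f' g g' n : (forall m, (m <= n)%N -> f m = f' m) ->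
  (forall m, (m <= n)%N -> g m = g' m) -> conv f g n = conv f' g' n.
Proof.
move=> Hf Hg; apply: eq_bigr => j _.
by rewrite Hf ?Hg // ?leq_subr // -ltnS.
Qed.

Lemma convC f g n : conv f g n = conv g f n.
Proof.
rewrite /conv (reindex_inj rev_ord_inj) /=; apply: eq_bigr => j _.
have hj : (j <= n)%N := ltn_ord j.
by rewrite subSS bin_sub // subKn // [f _ * _]mulrC.
Qed.

Lemma convDl f g h n : conv (fun m => f m + g m) h n = conv f h n + conv g h n.
Proof. by rewrite /conv -big_split; apply: eq_bigr => j _; rewrite mulrDl mulrDr. Qed.
Lemma convBl f g h n : conv (fun m => f m - g m) h n = conv f h n - conv g h n.
Proof. by rewrite /conv -sumrB; apply: eq_bigr => j _; rewrite mulrBl mulrBr. Qed.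
Lemma convZl c f h n : conv (fun m => c * f m) h n = c * conv f h n.
Proof. rewrite /conv mulr_sumr; apply: eq_bigr => j _. ring. Qed.
Lemma convDr f g h n : conv h (fun m => f m + g m) n = conv h f n + conv h g n.
Proof. by rewrite convC convDl !(convC h). Qed.
Lemma convBr f g h n : conv h (fun m => f m - g m) n = conv h f n - conv h g n.
Proof. by rewrite convC convBl !(convC h). Qed.
Lemma convZr c f h n : conv h (fun m => c * f m) n = c * conv h f n.
Proof. by rewrite convC convZl !(convC h). Qed.
Lemma convSumr N (F : nat -> nat -> rat) h n :
  conv h (fun m => \sum_(k < N) F k m) n = \sum_(k < N) conv h (F k) n.
Proof.
rewrite /conv exchange_big /=; apply: eq_bigr => j _.
by rewrite !mulr_sumr; apply: eq_bigr => k _.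
Qed.

Lemma conv_dell f n : conv del f n = f n.
Proof.
rewrite /conv big_ord_recl /= bin0 subn0 big1 ?addr0 /del /= ?mul1r //.
by move=> i _; rewrite /bump /= mul0r mulr0.
Qed.
Lemma conv_delr f n : conv f del n = f n.
Proof. by rewrite convC conv_dell. Qed.

Lemma leibniz f g n : conv f g n.+1 =
  conv (fun m => f m.+1) g n + conv f (fun m => g m.+1) n.
Proof.
rewrite /conv big_ord_recl /= bin0 subn0.
under eq_bigr => j _ do rewrite /bump /= add1n binS natrD mulrDl.
rewrite big_split /= addrA [RHS]addrC; congr (_ + _).
rewrite big_ord_recr /= bin_small // mul0r addr0.
rewrite [in RHS]big_ord_recl /= bin0 subn0; congr (_ + _).
apply: eq_bigr => j _; rewrite /bump /= add1n subSS -subSn //.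

Qed.

Lemma conv0 f g : conv f g 0 = f 0%N * g 0%N.
Proof. by rewrite /conv big_ord_recl big_ord0 addr0 /= mul1r. Qed.

Lemma convA f g h n : conv f (conv g h) n = conv (conv f g) h n.
Proof.
elim: n f g h => [|n IH] f g h.
  by rewrite !conv0 mulrA.
rewrite leibniz (conv_eq f f (fun m => conv g h m.+1) (fun m => conv (fun m => g m.+1) h m
   + conv g (fun m => h m.+1) m) n) //; last by move=> m _; rewrite leibniz.
rewrite convDr !IH.
rewrite [in RHS]leibniz (conv_eq (fun m => conv f g m.+1) (fun m => conv (fun m => f m.+1) g m
   + conv f (fun m => g m.+1) m) h h n) //; last by move=> m _; rewrite leibniz.
rewrite convDl; ring.
Qed.

Definition ex (a : rat) (n : nat) : rat := a ^+ n.

Lemma conv_ex a b n : conv (ex a) (ex b) n = (a + b) ^+ n.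
Proof.
elim: n a b => [|n IH] a b.
  by rewrite conv0 /ex !expr0 mul1r.
rewrite leibniz /ex.
under conv_eq => [m _| m _]; first by rewrite exprS; over. by over.
rewrite convZl.
under [X in _ + X]conv_eq => [m _| m _]; first by over. by rewrite exprS; over.
rewrite convZr !IH exprS; ring.
Qed.

Lemma ex0 : forall n, ex 0 n = del n.
Proof. by case=> [|n]; rewrite /ex /del /= ?expr0 // expr0n. Qed.

Lemma del0 : del 0 = 1. Proof. by []. Qed.
Lemma delS n : del n.+1 = 0. Proof. by []. Qed.

Lemma two_neq0 : (1 + 1 : rat) != 0.
Proof. by rewrite (_ : (1:rat) + 1 = 2%:R) // pnatr_eq0. Qed.

Lemma cancel_delex (Z : nat -> rat) :
  (forall n, conv Z (fun m => del m + 1) n = 0) -> forall n, Z n = 0.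
Proof.
move=> H n; elim: n {-2}n (leqnn n) => [|n IH] m Hm.
  have := H 0%N; rewrite conv0 /del /= => /eqP.
  rewrite (_ : m = 0%N); last by apply/eqP; rewrite -leqn0.
  rewrite mulf_eq0 (negbTE two_neq0) orbF => /eqP //.
rewrite leq_eqVlt in Hm; case/orP: Hm => [/eqP ->|]; last by rewrite ltnS; apply: IH.
have := H n.+1; rewrite /conv big_ord_recr /= big1 ?add0r; last first.
  move=> i _; rewrite IH; first by rewrite mul0r mulr0.
  by rewrite -ltnS ltn_ord.
rewrite subnn binn /del /= mul1r => /eqP; rewrite mulf_eq0 (negbTE two_neq0) orbF.
by move/eqP.
Qed.

Lemma cancel_exdel (Z : nat -> rat) :
  (forall n, conv Z (fun m => 1 - del m) n = 0) -> forall n, Z n = 0.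
Proof.
move=> H n; elim: n {-2}n (leqnn n) => [|n IH] m Hm.
  have -> : m = 0%N by apply/eqP; rewrite -leqn0.
  have := H 1%N; rewrite /conv big_ord_recr /= big_ord_recl big_ord0 /= delS del0.
  by rewrite subrr subr0 !mulr0 !addr0 mulr1 bin0 mul1r.
rewrite leq_eqVlt in Hm; case/orP: Hm => [/eqP ->|]; last by rewrite ltnS; apply: IH.
have := H n.+2; rewrite /conv big_ord_recr /= subnn del0 subrr !mulr0 addr0.
rewrite big_ord_recr /= big1 ?add0r; last first.
  move=> i _; rewrite IH; first by rewrite mul0r mulr0.
  by rewrite -ltnS ltn_ord.
rewrite subSS subSn // subnn delS subr0 mulr1 binSn => /eqP.
by rewrite mulf_eq0 pnatr_eq0 /= => /eqP.
Qed.

Definition sig (k n : nat) : rat := (k`!)%:R * (-2) ^+ n * (stirling2 n k)%:R.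

Lemma stir_big n k : (n < k)%N -> stirling2 n k = 0%N.
Proof.
elim: n k => [|n IH] [|k] //= Hk.
by rewrite !IH // ?muln0 // ltnW.
Qed.

Lemma sig_big n k : (n < k)%N -> sig k n = 0.
Proof. by move=> H; rewrite /sig stir_big // mulr0. Qed.

Lemma sig_S k n : sig k n.+1 = -2 * k%:R * (sig k n + sig k.-1 n).
Proof.
case: k => [|k]; first by rewrite /sig /= !mulr0 mul0r.
rewrite /sig /= factS natrD natrM !natrM exprS; ring.
Qed.

Lemma sig0 n : sig 0 n = del n.
Proof. by case: n => [|n]; rewrite /sig /= ?mulr0 // expr0 !mul1r. Qed.

Lemma stir1 n : stirling2 n.+1 1 = 1%N.
Proof. by elim: n => [|n IH] //; rewrite -[stirling2 n.+2 1]/(1 * stirling2 n.+1 1 + stirling2 n.+1 0)%N IH. Qed.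

Lemma sig1 n : sig 1 n = (-2) ^+ n - del n.
Proof.
case: n => [|n]; first by rewrite /sig /= expr0 mulr0 subrr.
by rewrite /sig stir1 delS subr0 /= !mul1r mulr1.
Qed.

Lemma sig_conv k n : conv (sig 1) (sig k) n = sig k.+1 n.
Proof.
elim: n k => [|n IH] k.
  by rewrite conv0 (sig_big 0 1) // (sig_big 0 k.+1) // mul0r.
case: k => [|k].
  by rewrite (conv_eq _ (sig 1) _ del) ?conv_delr // => m _; rewrite sig0.
have C0 : forall g, conv (sig 0) g n = g n.
  by move=> g; rewrite (conv_eq _ del _ g) ?conv_dell // => m _; rewrite sig0.
have C0' : conv (sig 1) (sig 0) n = sig 1 n.
  by rewrite (conv_eq _ (sig 1) _ del) ?conv_delr // => m _; rewrite sig0.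
have A : conv (fun m => sig 1 m.+1) (sig k.+1) n = -2 * 1%:R * (sig k.+2 n + sig k.+1 n).
  rewrite (conv_eq _ (fun m => -2 * 1%:R * (sig 1 m + sig 0 m)) _ (sig k.+1)) //;
    last by move=> m _; rewrite sig_S.
  by rewrite convZl convDl IH C0.
have B : conv (sig 1) (fun m => sig k.+1 m.+1) n =
   -2 * (k.+1)%:R * (sig k.+2 n + sig k.+1 n).
  rewrite (conv_eq (sig 1) (sig 1) _ (fun m => -2 * (k.+1)%:R * (sig k.+1 m + sig k m))) //;
    last by move=> m _; rewrite sig_S.
  by rewrite convZr convDr !IH.
rewrite leibniz A B [in RHS]sig_S /=; ring.
Qed.

Definition ST (y : nat -> rat) (n : nat) : rat := \sum_(k < n.+1) y k * sig k n.

Lemma ST_ext y n N : (n < N)%N -> ST y n = \sum_(k < N) y k * sig k n.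
Proof.
move=> H; rewrite -(subnK H); elim: (N - n.+1)%N => [|d IH]; first by rewrite add0n.
by rewrite addSn big_ord_recr /= -IH sig_big ?mulr0 ?addr0 // addnS ltnS leq_addl.
Qed.

Lemma ST_S y n : ST y n.+1 = ST (fun k => -2 * (k%:R * y k + (k.+1)%:R * y k.+1)) n.
Proof.
rewrite /ST.
under eq_bigr => k _ do rewrite sig_S mulrDr mulrDr.
rewrite big_split /= big_ord_recr /= sig_big // !mulr0 addr0.
rewrite [X in _ + X]big_ord_recl /= mulr0 mul0r mulr0 add0r.
rewrite -big_split /=; apply: eq_bigr => k _; rewrite /bump /= add1n; ring.
Qed.

Lemma conv_ST y n : conv (sig 1) (ST y) n = \sum_(k < n.+1) y k * sig k.+1 n.
Proof.
rewrite (conv_eq _ (sig 1) _ (fun m => \sum_(k < n.+1) y k * sig k m)) //; last first.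
  by move=> m Hm; rewrite (ST_ext y m n.+1).
rewrite (convSumr n.+1 (fun k m => y k * sig k m)); apply: eq_bigr => k _.
by rewrite convZr sig_conv.
Qed.

Definition b (k : nat) : rat := gbinom (- 2%:R^-1) k.
Definition c (k : nat) : rat := b k * harmonic k.
Definition L (n : nat) : rat := ST c n.

Lemma b0 : b 0 = 1.
Proof. by rewrite /b /gbinom big_ord0 /= divr1. Qed.

Lemma b_S k : (k.+1)%:R * b k.+1 = (- 2%:R^-1 - k%:R) * b k.
Proof.
rewrite /b /gbinom big_ord_recr /= factS natrM.
have h1 : (k.+1)%:R != 0 :> rat by rewrite pnatr_eq0.
have h2 : (k`!)%:R != 0 :> rat by rewrite pnatr_eq0 -lt0n fact_gt0.
have h1' : 1 + k%:R != 0 :> rat by rewrite addrC natr1 pnatr_eq0.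
field; by rewrite h2 h1'.
Qed.

Lemma harmonic0 : harmonic 0 = 0.
Proof. by rewrite /harmonic big_geq. Qed.

Lemma harmonic_S k : harmonic k.+1 = harmonic k + (k.+1%:R)^-1.
Proof. by rewrite /harmonic big_nat_recr. Qed.

Lemma ST_eq y y' n : (forall k, y k = y' k) -> ST y n = ST y' n.
Proof. by move=> H; apply: eq_bigr => k _; rewrite H. Qed.

Lemma STb n : ST b n = 1.
Proof.
elim: n => [|n IH].
  by rewrite /ST big_ord_recl big_ord0 addr0 b0 sig0 mul1r.
rewrite ST_S -[RHS]IH; apply: ST_eq => k.
rewrite b_S.
have h2 : (2%:R : rat) != 0 by rewrite pnatr_eq0.
by field.
Qed.

Lemma L_S n : L n.+1 = L n - 2%:R * ST (fun k => b k.+1) n.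
Proof.
rewrite /L ST_S /ST mulr_sumr -sumrB; apply: eq_bigr => k _.
rewrite /c harmonic_S.
have -> : (k.+1)%:R * (b k.+1 * (harmonic k + (k.+1)%:R^-1)) =
  ((k.+1)%:R * b k.+1) * harmonic k + b k.+1 * ((k.+1)%:R * (k.+1)%:R^-1) by ring.
rewrite b_S mulfV ?pnatr_eq0 //.
have h2 : (2%:R : rat) != 0 by rewrite pnatr_eq0.
by field.
Qed.

Lemma F1 n : conv (sig 1) (fun m => L m - L m.+1) n = 2%:R * (1 - del n).
Proof.
rewrite (conv_eq _ (sig 1) _ (fun m => 2%:R * ST (fun k => b k.+1) m)) //; last first.
  by move=> m _; rewrite L_S; ring.
rewrite convZr conv_ST; congr (_ * _).
rewrite -(STb n) (ST_ext b n n.+2) // [in RHS]big_ord_recl /= b0 sig0 mul1r.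
ring.
Qed.

Definition EL (m : nat) : rat := L m.+1 - L m.

Lemma H1 n : conv (ex (-2)) EL n - EL n = 2%:R * del n - 2%:R.
Proof.
have := F1 n.
rewrite (conv_eq _ (fun m => ex (-2) m - del m) _ (fun m => -1 * EL m)); last first.
  by move=> m _; rewrite /EL; ring. by move=> m _; rewrite sig1.
rewrite convZr convBl conv_dell => H.
have -> : conv (ex (-2)) EL n - EL n = - (-1 * (conv (ex (-2)) EL n - EL n)) by ring.
rewrite H; ring.
Qed.

Lemma H2 n : conv (ex 2%:R) EL n - EL n = 2%:R * ((3%:R) ^+ n - (2%:R) ^+ n).
Proof.
have E1 : forall m, (m <= n)%N -> conv (ex (-2)) EL m - EL m = 2%:R * del m - 2%:R * ex 1 m.
  by move=> m _; rewrite H1 /ex expr1n mulr1.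
have := conv_eq (ex 2%:R) (ex 2%:R) (fun m => conv (ex (-2)) EL m - EL m)
   (fun m => 2%:R * del m - 2%:R * ex 1 m) n (fun _ _ => erefl) E1.
rewrite convBr convA (convBr (fun m => 2%:R * del m) (fun m => 2%:R * ex 1 m)) !convZr conv_delr conv_ex.
rewrite (conv_eq (conv (ex 2%:R) (ex (-2))) del EL EL) ?conv_dell //; last first.
  by move=> m _; rewrite conv_ex -ex0 /ex subrr.
rewrite /ex => H.
set C := conv _ EL n in H *.
have -> : C - EL n = - (EL n - C) by ring.
rewrite H -natr1; ring.
Qed.

Lemma ex1 m : ex 1 m = 1. Proof. by rewrite /ex expr1n. Qed.

Lemma H3 n : conv (fun m => 1 - del m) (conv EL (fun m => del m + 1)) n
   = conv (ex 2%:R) EL n - EL n.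
Proof.
rewrite (conv_eq (fun m => 1 - del m) (fun m => ex 1 m - del m) _
   (conv (fun m => del m + ex 1 m) EL)); last first.
- move=> m _; rewrite convC; apply: conv_eq => // k _; by rewrite ex1.
- by move=> m _; rewrite ex1.
rewrite convA (conv_eq _ (fun m => ex 2%:R m - del m) EL EL) //; last first.
  move=> m _; rewrite convBl !convDr conv_ex !conv_delr !conv_dell !ex1.
  rewrite /ex -natr1. ring.
by rewrite convBl conv_dell.
Qed.

Lemma H4 n : conv (fun m => 1 - del m) (ex 2%:R) n = 3%:R ^+ n - 2%:R ^+ n.
Proof.
rewrite (conv_eq (fun m => 1 - del m) (fun m => ex 1 m - del m) (ex 2%:R) (ex 2%:R)) //;
  last by move=> m _; rewrite ex1.
by rewrite convBl conv_ex conv_dell /ex -natr1 addrC.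
Qed.

Lemma TL n : conv EL (fun m => del m + 1) n = 2%:R * 2%:R ^+ n.
Proof.
pose Z m := conv EL (fun m => del m + 1) m - 2%:R * ex 2%:R m.
suff : Z n = 0 by rewrite /Z /ex => /eqP; rewrite subr_eq0 => /eqP.
apply: cancel_exdel => {}n.
rewrite convC (conv_eq _ (fun m => 1 - del m) _ (fun m => conv EL (fun m => del m + 1) m - 2%:R * ex 2%:R m)) //.
rewrite (convBr (conv EL (fun m => del m + 1))) convZr H3 H4.
have := H2 n; rewrite /ex => ->; ring.
Qed.

Lemma size_euler x n : size (euler_seq x n) = n.+1.
Proof. by elim: n => [|n IH] //=; rewrite size_rcons IH. Qed.

Lemma nth_euler x n k : (k <= n)%N -> nth 0 (euler_seq x n) k = eulerE k x.
Proof.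
elim: n => [|n IH] Hk; first by move: Hk; rewrite leqn0 => /eqP ->.
move: Hk; rewrite leq_eqVlt => /orP [/eqP -> //|Hk].
by rewrite [euler_seq x n.+1]/= nth_rcons size_euler Hk IH.
Qed.

Lemma eulerE_S x n : eulerE n.+1 x =
  x ^+ n.+1 - 2%:R^-1 * \sum_(k < n.+1) 'C(n.+1, k)%:R * eulerE k x.
Proof.
rewrite {1}/eulerE [euler_seq x n.+1]/= nth_rcons size_euler ltnn eqxx.
congr (_ - _ * _); apply: eq_bigr => k _; rewrite nth_euler //.
by rewrite -ltnS.
Qed.

Definition Eu (k : nat) : rat := eulerE k 1.

Lemma euler_sum n : conv Eu (ex 1) n = 2%:R - Eu n.
Proof.
case: n => [|n].
  by rewrite conv0 ex1 mulr1 /Eu /eulerE /=; ring.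
rewrite /conv big_ord_recr /= subnn binn ex1 mulr1 mul1r.
under eq_bigr => k _ do rewrite ex1 mulr1.
have := eulerE_S 1 n; rewrite -/(Eu n.+1) expr1n.
under [in X in _ = X -> _]eq_bigr => k _ do rewrite -/(Eu k).
move=> ->.
have h2 : (2%:R : rat) != 0 by rewrite pnatr_eq0.
by field.
Qed.

Definition g (n : nat) : rat := \sum_(k < n) 'C(n, k.+1)%:R * Eu k.

Lemma g_S n : g n.+1 - g n = 2%:R - Eu n.
Proof.
rewrite /g.
under eq_bigr => k _ do rewrite binS natrD mulrDl.
rewrite big_split /= big_ord_recr /= bin_small // mul0r addr0 addrAC subrr add0r.
rewrite -euler_sum /conv; apply: eq_bigr => k _; by rewrite ex1 mulr1.
Qed.

Lemma TG n : conv (fun m => g m.+1 - g m) (fun m => del m + 1) n = 2%:R * 2%:R ^+ n.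
Proof.
rewrite (conv_eq _ (fun m => 2%:R * ex 1 m - Eu m) _ (fun m => del m + ex 1 m)); last first.
- by move=> m _; rewrite ex1.
- by move=> m _; rewrite g_S ex1 mulr1.
rewrite convBl convZl !convDr conv_delr conv_ex conv_delr euler_sum ex1 /ex -natr1.
ring.
Qed.

Lemma EL_g n : EL n = g n.+1 - g n.
Proof.
pose Z m := EL m - (g m.+1 - g m).
suff : Z n = 0 by rewrite /Z => /eqP; rewrite subr_eq0 => /eqP.
apply: cancel_delex => {}n.
by rewrite /Z convBl TL TG subrr.
Qed.

Lemma L_g n : L n = g n.
Proof.
elim: n => [|n IH].
  by rewrite /L /ST big_ord_recl big_ord0 /c harmonic0 /g big_ord0 !mulr0 mul0r addr0.
have -> : L n.+1 = L n + EL n by rewrite /EL; ring.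
by rewrite EL_g IH; ring.
Qed.

Theorem mainTheorem9 (n : nat) : (0 < n)%N ->
  \sum_(1 <= k < n.+1)
     (stirling2 n k)%:R * gbinom (- 2%:R^-1) k * (k`!)%:R * harmonic k
       * (-1) ^+ n * 2%:R ^+ n
  = \sum_(0 <= k < n) ('C(n, k.+1))%:R * eulerE k 1 :> rat.
Proof.
move=> _.
rewrite big_mkord -/(g n) -L_g /L /ST big_ord_recl /c harmonic0 mulr0 mul0r add0r.
rewrite big_add1 /= big_mkord; apply: eq_bigr => k _.
rewrite /bump /= add1n /b /sig.
have -> : (-2 : rat) = -1 * 2%:R by ring.
rewrite exprMn; ring.
Qed.
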